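(* Let $d$ be a positive integer. There exists a matrix $A\in\mathbb{R}^{[4]\times[3]}$ such that (i) $A$ does not have an elimination ordering, and (ii) for every vector $b\in\mathbb{R}^{[4]}$ the solution graph $G(R(A,b))$ is connected.
   Context: Fix a positive integer $d$ and let $D=\{0,1,\dots,d\}$; $[n]=\{1,\dots,n\}$. For $A\in\mathbb{R}^{[m]\times[n]}$ and $b\in\mathbb{R}^{[m]}$, $R(A,b)=\{x\in D^{[n]} : Ax\ge b\}$. For $R\subseteq D^{[n]}$, the solution graph $G(R)$ is the undirected graph with vertex set $R$ in which $x,y$ are adjacent iff they differ in exactly one coordinate. A matrix $A=(a_{ij})$ with column index set $J$ can be eliminated at column $j\in J$ if (i) for every row $i$ with $a_{ij}>0$ we have $a_{ij'}=0$ for all $j'\in J\setminus\{j\}$, or (ii) for every row $i$ with $a_{ij}<0$ we have $a_{ij'}=0$ for all $j'\in J\setminus\{j\}$. For $J'\subseteq[n]$, $\mathrm{elm}(A,J')$ is the submatrix of $A$ obtained by deleting the columns indexed by $J'$. A sequence $(j_1,\dots,j_n)$ of the elements of $[n]$ is an elimination ordering (EO) of $A$ if for every $t\in[n]$ the matrix $\mathrm{elm}(A,\{j_1,\dots,j_{t-1}\})$ can be eliminated at column $j_t$. *)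

(* Defs.v *)
From HB Require Import structures.
From mathcomp Require Import all_boot all_order all_algebra.
From mathcomp Require Import Rstruct.
Set Implicit Arguments. Unset Strict Implicit. Unset Printing Implicit Defensive.
Import Order.TTheory GRing.Theory Num.Theory.
Local Open Scope ring_scope.

(* D^[n] with D = {0,...,d}: points are finite functions 'I_n -> 'I_d.+1. *)
Definition point (d n : nat) := {ffun 'I_n -> 'I_d.+1}.

Section Defs.
Variable R : numDomainType.

Definition vec_of (d n : nat) (x : point d n) : 'cV[R]_n :=
  \col_j ((nat_of_ord (x j))%:R).

Definition in_sol (d m n : nat) (A : 'M[R]_(m, n)) (b : 'cV[R]_m)
  (x : point d n) : bool :=
  [forall i : 'I_m, b i 0 <= (A *m vec_of x) i 0].

Definition adj1 (d n : nat) (x y : point d n) : bool :=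
  #|[set j : 'I_n | x j != y j]| == 1%N.

Definition sol_edge (d m n : nat) (A : 'M[R]_(m, n)) (b : 'cV[R]_m) :
  rel (point d n) :=
  fun x y => [&& in_sol A b x, in_sol A b y & adj1 x y].

Definition sol_graph_connected (d m n : nat) (A : 'M[R]_(m, n))
  (b : 'cV[R]_m) : Prop :=
  forall x y : point d n, in_sol A b x -> in_sol A b y ->
    connect (sol_edge A b) x y.

Definition can_elim (m n : nat) (A : 'M[R]_(m, n)) (J : {set 'I_n})
  (j : 'I_n) : Prop :=
  (forall i : 'I_m, 0 < A i j ->
     forall j' : 'I_n, j' \in J -> j' != j -> A i j' = 0) \/
  (forall i : 'I_m, A i j < 0 ->
     forall j' : 'I_n, j' \in J -> j' != j -> A i j' = 0).

Definition is_EO (m n : nat) (A : 'M[R]_(m, n)) (s : seq 'I_n) : Prop :=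
  perm_eq s (enum 'I_n) /\
  (* t ranges over 0..n-1; the default element of nth is irrelevant
     since size s = n *)
  forall t : 'I_n,
    can_elim A [set j | j \notin take t s] (nth t s t).

Definition has_EO (m n : nat) (A : 'M[R]_(m, n)) : Prop :=
  exists s : seq 'I_n, is_EO A s.
End Defs.
Arguments sol_graph_connected {R} d {m n} A b.

(* Main.v *)
Require Import Defs.
From mathcomp Require Import all_boot all_order all_algebra.
From mathcomp Require Import Rstruct.
From mathcomp Require Import lra.
Local Open Scope ring_scope.
Set Implicit Arguments. Unset Strict Implicit.
Import Order.TTheory GRing.Theory Num.Theory.

Notation RR := Rdefinitions.R.

Definition Aval (i j : nat) : RR :=
  match i, j with
  | 0, 0 => -1 | 0, 1 => -1 | 1, 0 => -1 | 1, 1 => 1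
  | 2, 0 => 1 | 2, 2 => -1 | 3, 0 => 1 | 3, 2 => 1 | _, _ => 0 end.

Definition A0 : 'M[RR]_(4, 3) := \matrix_(i < 4, j < 3) Aval i j.

Definition c0 : 'I_3 := @Ordinal 3 0 isT.
Definition c1 : 'I_3 := @Ordinal 3 1 isT.
Definition c2 : 'I_3 := @Ordinal 3 2 isT.
Definition r0 : 'I_4 := @Ordinal 4 0 isT.
Definition r1 : 'I_4 := @Ordinal 4 1 isT.
Definition r2 : 'I_4 := @Ordinal 4 2 isT.
Definition r3 : 'I_4 := @Ordinal 4 3 isT.

Definition X d (z : point d 3) (k : 'I_3) : RR := (nat_of_ord (z k))%:R.

Lemma rowval d (z : point d 3) (i : 'I_4) :
  (A0 *m vec_of RR z) i 0 =
  Aval i 0 * X z c0 + Aval i 1 * X z c1 + Aval i 2 * X z c2.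
Proof.
rewrite mxE !big_ord_recr big_ord0 /= !mxE add0r.
rewrite /X; congr (_ * (nat_of_ord (z _))%:R + _ * (nat_of_ord (z _))%:R + _ * (nat_of_ord (z _))%:R); exact: val_inj.
Qed.

Lemma in_solE d (b : 'cV[RR]_4) (z : point d 3) :
  in_sol A0 b z <->
  [/\ b r0 0 <= - X z c0 - X z c1, b r1 0 <= - X z c0 + X z c1,
      b r2 0 <= X z c0 - X z c2 & b r3 0 <= X z c0 + X z c2].
Proof.
split.
- move/forallP=> H.
  have h0 := H r0; have h1 := H r1; have h2 := H r2; have h3 := H r3.
  rewrite !rowval /= in h0 h1 h2 h3.
  split; lra.
- case=> h0 h1 h2 h3; apply/forallP => -[[|[|[|[|i]]]] Hi] //; rewrite rowval /=.
  + have -> : Ordinal Hi = r0 by apply: val_inj. lra.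
  + have -> : Ordinal Hi = r1 by apply: val_inj. lra.
  + have -> : Ordinal Hi = r2 by apply: val_inj. lra.
  + have -> : Ordinal Hi = r3 by apply: val_inj. lra.
Qed.

Lemma step d (b : 'cV[RR]_4) (z w : point d 3) (j : 'I_3) :
  in_sol A0 b z -> in_sol A0 b w -> (forall k, k != j -> z k = w k) ->
  connect (sol_edge A0 b) z w.
Proof.
move=> Hz Hw Hk.
have [->|neq] := eqVneq z w; first exact: connect0.
apply: connect1; rewrite /sol_edge Hz Hw /=; rewrite /adj1.
apply/eqP; rewrite -[RHS](cards1 j); apply: eq_card => k; rewrite !inE.
have [->|nkj] := eqVneq k j.
  apply/negP => /eqP ejj; move/eqP: neq; apply; apply/ffunP => k'.
  have [->//|] := eqVneq k' j; exact: Hk.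
by rewrite Hk // eqxx.
Qed.

Definition upd d (z : point d 3) (j : 'I_3) (v : 'I_d.+1) : point d 3 :=
  [ffun k => if k == j then v else z k].

Lemma Xupd d (z : point d 3) j v k :
  X (upd z j v) k = if k == j then (nat_of_ord v)%:R else X z k.
Proof. by rewrite /X /upd ffunE; case: (k == j). Qed.

Lemma path_le d (b : 'cV[RR]_4) (x y : point d 3) :
  in_sol A0 b x -> in_sol A0 b y -> X x c0 <= X y c0 ->
  connect (sol_edge A0 b) x y.
Proof.
move=> Hx Hy le.
set z1 := upd x c1 (y c1).
set z2 := upd z1 c0 (y c0).
set z3 := upd z2 c2 (y c2).
have e3 : z3 = y.
  apply/ffunP => -[[|[|[|k]]] Hk] //; rewrite /z3 /z2 /z1 /upd !ffunE /=; congr (y _); exact: val_inj.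
have hx := Hx; have hy := Hy.
move/in_solE: hx => [x0 x1 x2 x3]; move/in_solE: hy => [y0 y1 y2 y3].
have H1 : in_sol A0 b z1.
  apply/in_solE; rewrite !Xupd /=; split; rewrite /X in x0 x1 x2 x3 y0 y1 y2 y3 le *; lra.
have H2 : in_sol A0 b z2.
  apply/in_solE; rewrite !Xupd /=; split; rewrite /X in x0 x1 x2 x3 y0 y1 y2 y3 le *; lra.
have c01 : connect (sol_edge A0 b) x z1.
  apply: (step (j := c1)) => // k nk; rewrite /z1 /upd ffunE.
  by rewrite (negbTE nk).
have c12 : connect (sol_edge A0 b) z1 z2.
  apply: (step (j := c0)) => // k nk; rewrite /z2 /upd [in RHS]ffunE.
  by rewrite (negbTE nk).
have c23 : connect (sol_edge A0 b) z2 y.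
  rewrite -e3; apply: (step (j := c2)) => //; first by rewrite e3.
  by move=> k nk; rewrite /z3 /upd [in RHS]ffunE (negbTE nk).
exact: connect_trans (connect_trans c01 c12) c23.
Qed.

Lemma sol_sym d (b : 'cV[RR]_4) : symmetric (sol_edge (d:=d) A0 b).
Proof.
move=> u v.
have adjC : Defs.adj1 u v = Defs.adj1 v u.
  rewrite /Defs.adj1.
  have -> : [set j | u j != v j] = [set j | v j != u j].
    by apply/setP => k; rewrite !inE eq_sym.
  by [].
rewrite /sol_edge adjC.
by case: (in_sol A0 b u); case: (in_sol A0 b v).
Qed.

Theorem lemma1 (d : nat) (hd : (0 < d)%N) :
  exists A : 'M[Rdefinitions.R]_(4, 3),
    ~ has_EO A /\
    forall b : 'cV[Rdefinitions.R]_4, sol_graph_connected d A b.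
Proof.
exists A0; split.
- case=> s [_ /(_ ord0)]; rewrite take0.
  set j := nth _ _ _.
  case=> H; move: j H => [[|[|[|j]]] Hj] //= H.
  + have := H r2; rewrite !mxE /= => /(_ _ c2); rewrite inE /= mxE /= => h.
    have := h ltac:(lra) isT isT; lra.
  + have := H r1; rewrite !mxE /= => /(_ _ c0); rewrite inE /= mxE /= => h.
    have := h ltac:(lra) isT isT; lra.
  + have := H r3; rewrite !mxE /= => /(_ _ c0); rewrite inE /= mxE /= => h.
    have := h ltac:(lra) isT isT; lra.
  + have := H r0; rewrite !mxE /= => /(_ _ c1); rewrite inE /= mxE /= => h.
    have := h ltac:(lra) isT isT; lra.
  + have := H r0; rewrite !mxE /= => /(_ _ c0); rewrite inE /= mxE /= => h.
    have := h ltac:(lra) isT isT; lra.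
  + have := H r2; rewrite !mxE /= => /(_ _ c0); rewrite inE /= mxE /= => h.
    have := h ltac:(lra) isT isT; lra.
- move=> b x y Hx Hy.
  have [le|lt] := lerP (X x c0) (X y c0); first exact: path_le.
  have sym : connect_sym (sol_edge (d:=d) A0 b) by apply: sym_connect_sym; exact: sol_sym.
  rewrite sym; apply: path_le => //; exact: ltW.
Qed.
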